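(* Let $T$ be a prae-dilator. If $(X,\iota_X,L_X)$ is a good Bachmann-Howard system for $T$, then $(\vartheta_T(X),\iota_{\vartheta_T(X)},L_{\vartheta_T(X)})$ is also a good Bachmann-Howard system for $T$, where $\iota_{\vartheta_T(X)}:\vartheta_T(X)\to\vartheta_T(\vartheta_T(X))$ is defined by $\iota_{\vartheta_T(X)}(\vartheta\sigma)=\vartheta\,T_{\iota_X}(\sigma)$.
   Context: The finite subset functor $[\cdot]^{<\omega}$ sends a set $X$ to the set of its finite subsets and a function $f$ to $[f]^{<\omega}(a)=\{f(x)\mid x\in a\}$; subsets of linear orders are regarded as suborders. A prae-dilator consists of an endofunctor $X\mapsto T_X$ on the category of linear orders (morphisms: order embeddings) and a natural transformation $\operatorname{supp}^T:T\Rightarrow[\cdot]^{<\omega}$ such that for every linear order $X$ and every $\sigma\in T_X$ we have $\sigma\in\operatorname{rng}(T_{\iota_\sigma})$, where $\iota_\sigma:\operatorname{supp}^T_X(\sigma)\hookrightarrow X$ is the inclusion. For a linear order $Z$ and finite $a,b\subseteq Z$ write $a<^{\operatorname{fin}}_Z b$ iff for every $s\in a$ there is $t\in b$ with $s<_Z t$; $\leq^{\operatorname{fin}}_Z$ is defined analogously with $\leq_Z$; singletons $\{s\}$ are written $s$. For a linear order $X$ let $\vartheta_T(X)$ be the set of formal terms $\vartheta\sigma$ with $\sigma\in T_X$. A Bachmann-Howard system (for $T$) is a triple $(X,\iota_X,L_X)$ with $X$ a linear order, $\iota_X:X\to\vartheta_T(X)$ and $L_X:X\to\omega$ functions, such that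 $L_{\vartheta_T(X)}\circ\iota_X=L_X$, where $L_{\vartheta_T(X)}(\vartheta\sigma):=\max\{L_X(x)\mid x\in\operatorname{supp}^T_X(\sigma)\}+1$ (maximum of the empty set is $0$). For such a system the linear order $\vartheta\sigma<_{\vartheta_T(X)}\vartheta\tau$ is defined by recursion on $L_{\vartheta_T(X)}(\vartheta\sigma)+L_{\vartheta_T(X)}(\vartheta\tau)$ to hold iff either (a) $\sigma<_{T_X}\tau$ and $[\iota_X]^{<\omega}(\operatorname{supp}^T_X(\sigma))<^{\operatorname{fin}}_{\vartheta_T(X)}\vartheta\tau$, or (b) $\tau<_{T_X}\sigma$ and $\vartheta\sigma\leq^{\operatorname{fin}}_{\vartheta_T(X)}[\iota_X]^{<\omega}(\operatorname{supp}^T_X(\tau))$. A Bachmann-Howard system $(X,\iota_X,L_X)$ is good if $\iota_X:X\to\vartheta_T(X)$ is an order embedding with respect to $<_X$ and $<_{\vartheta_T(X)}$ (so that $T_{\iota_X}:T_X\to T_{\vartheta_T(X)}$ is defined). The order on $\vartheta_T(\vartheta_T(X))$ is the one obtained from the system $(\vartheta_T(X),\iota_{\vartheta_T(X)},L_{\vartheta_T(X)})$ by the same recursive definition. *)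

(* Defs.v *)
From Stdlib Require Import List PeanoNat ProofIrrelevance.
Import ListNotations.
Set Implicit Arguments.

Record LO : Type := MkLO {
  car :> Type;
  lt : car -> car -> Prop;
  lt_irrefl : forall x, ~ lt x x;
  lt_trans : forall x y z, lt x y -> lt y z -> lt x z;
  lt_total : forall x y, lt x y \/ x = y \/ lt y x
}.
Arguments lt {l} _ _.
Arguments lt_irrefl {l} _ _.
Arguments lt_trans {l} _ _ _ _ _.
Arguments lt_total {l} _ _.

Definition is_linear_order (C : Type) (r : C -> C -> Prop) : Prop :=
  (forall x, ~ r x x) /\
  (forall x y z, r x y -> r y z -> r x z) /\
  (forall x y, r x y \/ x = y \/ r y x).

Definition LO_of (C : Type) (r : C -> C -> Prop) (H : is_linear_order r) : LO :=
  MkLO r (proj1 H) (proj1 (proj2 H)) (proj2 (proj2 H)).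

Record Emb (X Y : LO) : Type := MkEmb {
  emb :> X -> Y;
  emb_mono : forall {x y}, lt x y -> lt (emb x) (emb y)
}.

Definition emb_id (X : LO) : Emb X X := @MkEmb X X (fun x => x) (fun x y h => h).
Definition emb_comp (X Y Z : LO) (g : Emb Y Z) (f : Emb X Y) : Emb X Z :=
  @MkEmb X Z (fun x => g (f x)) (fun x y h => emb_mono g (emb_mono f h)).

(** finite subsets are represented by lists, compared up to membership;
    a finite subset of a linear order, regarded as a suborder *)
Definition sub_lt (X : LO) (a : list X) (x y : {x : X | In x a}) : Prop :=
  lt (proj1_sig x) (proj1_sig y).

Lemma sub_is_linear (X : LO) (a : list X) : is_linear_order (@sub_lt X a).
Proof.
  unfold sub_lt; split; [|split].
  - intros [x hx]; apply lt_irrefl.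
  - intros [x hx] [y hy] [z hz]; apply lt_trans.
  - intros [x hx] [y hy]; simpl.
    destruct (lt_total x y) as [h|[h|h]]; auto.
    right; left; subst; f_equal; apply proof_irrelevance.
Qed.

Definition subLO (X : LO) (a : list X) : LO := LO_of (sub_is_linear X a).
Arguments subLO {X} a.

Definition incl_emb (X : LO) (a : list X) : Emb (subLO a) X :=
  @MkEmb (subLO a) X (fun x => proj1_sig x) (fun x y h => h).
Arguments incl_emb {X} a.

Record praedilator : Type := MkPD {
  Tobj :> LO -> LO;
  Tmap : forall X Y : LO, Emb X Y -> Emb (Tobj X) (Tobj Y);
  Tmap_id : forall (X : LO) (s : Tobj X), @Tmap X X (@emb_id X) s = s;
  Tmap_comp : forall (X Y Z : LO) (g : Emb Y Z) (f : Emb X Y) (s : Tobj X),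
      @Tmap X Z (emb_comp g f) s = @Tmap Y Z g (@Tmap X Y f s);
  supp : forall X : LO, Tobj X -> list X;
  supp_nat : forall (X Y : LO) (f : Emb X Y) (s : Tobj X) (y : Y),
      In y (@supp Y (@Tmap X Y f s)) <-> In y (map f (@supp X s));
  supp_cond : forall (X : LO) (s : Tobj X),
      exists s0 : Tobj (subLO (@supp X s)),
        @Tmap (subLO (@supp X s)) X (incl_emb (@supp X s)) s0 = s
}.
Arguments Tmap _ {X Y} _.
Arguments supp _ {X} _.

Inductive theta (T : praedilator) (X : LO) : Type :=
  | vartheta : T X -> theta T X.
Arguments vartheta {T X} _.

Definition maxlist (l : list nat) : nat := fold_right Nat.max 0 l.

Section Theta.
Variables (T : praedilator) (X : LO) (iota : X -> theta T X) (L : X -> nat).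

Definition Ltheta (a : theta T X) : nat :=
  match a with vartheta s => S (maxlist (map L (supp T s))) end.

(** the order on vartheta_T(X), by recursion with a fuel parameter bounding
    L(vartheta s) + L(vartheta t) *)
Fixpoint theta_lt_fuel (k : nat) (a b : theta T X) : Prop :=
  match k with
  | 0 => False
  | S k' =>
    match a, b with
    | vartheta s, vartheta t =>
      (lt s t /\ forall x, In x (supp T s) -> theta_lt_fuel k' (iota x) b)
      \/
      (lt t s /\ exists y, In y (supp T t) /\
                  (theta_lt_fuel k' a (iota y) \/ a = iota y))
    end
  end.

Definition theta_lt (a b : theta T X) : Prop :=
  theta_lt_fuel (S (Ltheta a + Ltheta b)) a b.

Definition BH_system : Prop := forall x : X, Ltheta (iota x) = L x.

Definition iota_mono : Prop :=
  forall x y : X, lt x y -> theta_lt (iota x) (iota y).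

Definition good : Prop := is_linear_order theta_lt /\ iota_mono.

End Theta.

Definition ThetaLO (T : praedilator) (X : LO) (iota : X -> theta T X) (L : X -> nat)
  (H : is_linear_order (theta_lt iota L)) : LO := LO_of H.

Definition iota_next (T : praedilator) (X : LO) (iota : X -> theta T X) (L : X -> nat)
  (H : is_linear_order (theta_lt iota L)) (Hm : iota_mono iota L)
  (a : ThetaLO H) : theta T (ThetaLO H) :=
  match a with
  | vartheta s => vartheta (Tmap T (@MkEmb X (ThetaLO H) iota Hm) s)
  end.
Arguments iota_next {T X iota L} H Hm a.

(* Main.v *)
Require Import Defs.
From Stdlib Require Import List.
From Stdlib Require Import Lia Classical.

Lemma maxlist_ge (A : Type) (f : A -> nat) (l : list A) x :
  In x l -> f x <= maxlist (map f l).
Proof.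
  induction l as [|y l IH]; simpl; [tauto|].
  intros [<-|h]; [lia|]. specialize (IH h). lia.
Qed.

Lemma maxlist_le (A : Type) (f : A -> nat) (l : list A) n :
  (forall x, In x l -> f x <= n) -> maxlist (map f l) <= n.
Proof.
  induction l as [|y l IH]; simpl; intros h; [lia|].
  assert (f y <= n) by auto. assert (maxlist (map f l) <= n) by auto. lia.
Qed.

Lemma maxlist_eq (A : Type) (f : A -> nat) (l1 l2 : list A) :
  (forall y, In y l1 <-> In y l2) -> maxlist (map f l1) = maxlist (map f l2).
Proof.
  intros h.
  assert (maxlist (map f l1) <= maxlist (map f l2)) by
    (apply maxlist_le; intros x hx; apply maxlist_ge; apply h; auto).
  assert (maxlist (map f l2) <= maxlist (map f l1)) by
    (apply maxlist_le; intros x hx; apply maxlist_ge; apply h; auto).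
  lia.
Qed.

Lemma L_lt_supp (T : praedilator) (X : LO) (L : X -> nat) s x :
  In x (supp T s) -> L x < Ltheta L (vartheta s).
Proof.
  intros h. simpl. pose proof (maxlist_ge _ L _ _ h). lia.
Qed.

Lemma fuel_indep (T : praedilator) (X : LO) (iota : X -> theta T X)
  (L : X -> nat) (HBH : BH_system iota L) :
  forall k k' a b, Ltheta L a + Ltheta L b < k ->
    Ltheta L a + Ltheta L b < k' ->
    (theta_lt_fuel iota k a b <-> theta_lt_fuel iota k' a b).
Proof.
  induction k as [|k IH]; intros k' a b h1 h2; [lia|].
  destruct k' as [|k']; [lia|].
  destruct a as [s], b as [t]. simpl theta_lt_fuel.
  split; (intros [[h hh]|[h [y [hy hh]]]]; [left|right]).
  - split; [exact h|]. intros x hx.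
    pose proof (L_lt_supp _ _ L s x hx). pose proof (HBH x).
    apply (proj1 (IH k' (iota x) (vartheta t) ltac:(lia) ltac:(lia))), hh, hx.
  - split; [exact h|]. exists y. split; [exact hy|].
    destruct hh as [hh|hh]; [left|right; exact hh].
    pose proof (L_lt_supp _ _ L t y hy). pose proof (HBH y).
    apply (proj1 (IH k' (vartheta s) (iota y) ltac:(lia) ltac:(lia))), hh.
  - split; [exact h|]. intros x hx.
    pose proof (L_lt_supp _ _ L s x hx). pose proof (HBH x).
    apply (proj2 (IH k' (iota x) (vartheta t) ltac:(lia) ltac:(lia))), hh, hx.
  - split; [exact h|]. exists y. split; [exact hy|].
    destruct hh as [hh|hh]; [left|right; exact hh].
    pose proof (L_lt_supp _ _ L t y hy). pose proof (HBH y).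
    apply (proj2 (IH k' (vartheta s) (iota y) ltac:(lia) ltac:(lia))), hh.
Qed.

Lemma fuel_step (T : praedilator) (X : LO) (iota : X -> theta T X) k s t :
  theta_lt_fuel iota (S k) (vartheta s) (vartheta t) <->
  (lt s t /\ forall x, In x (supp T s) -> theta_lt_fuel iota k (iota x) (vartheta t)) \/
  (lt t s /\ exists y, In y (supp T t) /\
     (theta_lt_fuel iota k (vartheta s) (iota y) \/ vartheta s = iota y)).
Proof. reflexivity. Qed.

Lemma unfold_lt (T : praedilator) (X : LO) (iota : X -> theta T X)
  (L : X -> nat) (HBH : BH_system iota L) s t :
  theta_lt iota L (vartheta s) (vartheta t) <->
  (lt s t /\ forall x, In x (supp T s) -> theta_lt iota L (iota x) (vartheta t)) \/
  (lt t s /\ exists y, In y (supp T t) /\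
     (theta_lt iota L (vartheta s) (iota y) \/ vartheta s = iota y)).
Proof.
  unfold theta_lt at 1. rewrite fuel_step.
  split; (intros [[h hh]|[h [y [hy hh]]]]; [left|right]).
  - split; [exact h|]. intros x hx. unfold theta_lt.
    eapply fuel_indep; [exact HBH| | |exact (hh x hx)];
    rewrite HBH; pose proof (L_lt_supp _ _ L s x hx); simpl in *; lia.
  - split; [exact h|]. exists y. split; [exact hy|].
    destruct hh as [hh|hh]; [left|right; exact hh]. unfold theta_lt.
    eapply fuel_indep; [exact HBH| | |exact hh];
    rewrite HBH; pose proof (L_lt_supp _ _ L t y hy); simpl in *; lia.
  - split; [exact h|]. intros x hx. unfold theta_lt in hh.
    eapply fuel_indep; [exact HBH| | |exact (hh x hx)];
    rewrite HBH; pose proof (L_lt_supp _ _ L s x hx); simpl in *; lia.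
  - split; [exact h|]. exists y. split; [exact hy|].
    destruct hh as [hh|hh]; [left|right; exact hh]. unfold theta_lt in hh.
    eapply fuel_indep; [exact HBH| | |exact hh];
    rewrite HBH; pose proof (L_lt_supp _ _ L t y hy); simpl in *; lia.
Qed.
Arguments unfold_lt {T X iota L} HBH s t.


Lemma Ltheta_pos (T : praedilator) (X : LO) (L : X -> nat) (a : theta T X) :
  1 <= Ltheta L a.
Proof. destruct a; simpl; lia. Qed.

Lemma th_irrefl (T : praedilator) (X : LO) (iota : X -> theta T X)
  (L : X -> nat) (HBH : BH_system iota L) a : ~ theta_lt iota L a a.
Proof.
  destruct a as [s]. rewrite (unfold_lt HBH).
  intros [[h _]|[h _]]; exact (lt_irrefl _ h).
Qed.
Arguments th_irrefl {T X iota L} HBH a.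


Lemma th_asym (T : praedilator) (X : LO) (iota : X -> theta T X)
  (L : X -> nat) (HBH : BH_system iota L) :
  forall n a b, Ltheta L a + Ltheta L b <= n ->
    theta_lt iota L a b -> theta_lt iota L b a -> False.
Proof.
  induction n as [|n IH]; intros a b hn h1 h2.
  { pose proof (Ltheta_pos _ _ L a). lia. }
  destruct a as [s], b as [t].
  rewrite (unfold_lt HBH) in h1, h2.
  destruct h1 as [[h1 k1]|[h1 [y [hy k1]]]];
  destruct h2 as [[h2 k2]|[h2 [x [hx k2]]]].
  - exact (lt_irrefl _ (lt_trans _ _ _ h1 h2)).
  - pose proof (k1 x hx) as hxb. destruct k2 as [k2|k2].
    + pose proof (L_lt_supp _ _ L s x hx). pose proof (HBH x).
      apply (IH (iota x) (vartheta t)); auto. lia.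
    + rewrite <- k2 in hxb. exact (th_irrefl HBH _ hxb).
  - pose proof (k2 y hy) as hya. destruct k1 as [k1|k1].
    + pose proof (L_lt_supp _ _ L t y hy). pose proof (HBH y).
      apply (IH (vartheta s) (iota y)); auto. lia.
    + rewrite <- k1 in hya. exact (th_irrefl HBH _ hya).
  - exact (lt_irrefl _ (lt_trans _ _ _ h1 h2)).
Qed.
Arguments th_asym {T X iota L} HBH : rename.


Lemma th_trans (T : praedilator) (X : LO) (iota : X -> theta T X)
  (L : X -> nat) (HBH : BH_system iota L) :
  forall n a b c, Ltheta L a + Ltheta L b + Ltheta L c <= n ->
    theta_lt iota L a b -> theta_lt iota L b c -> theta_lt iota L a c.
Proof.
  induction n as [|n IH]; intros a b c hn h1 h2.
  { pose proof (Ltheta_pos _ _ L a). lia. }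
  pose proof (h1) as h1'. pose proof h2 as h2'.
  destruct a as [r], b as [s], c as [t].
  rewrite (unfold_lt HBH) in h1, h2.
  destruct h1 as [[h1 k1]|[h1 [x [hx k1]]]];
  destruct h2 as [[h2 k2]|[h2 [y [hy k2]]]].
  - rewrite (unfold_lt HBH). left. split; [exact (lt_trans _ _ _ h1 h2)|].
    intros z hz. pose proof (L_lt_supp _ _ L r z hz). pose proof (HBH z).
    apply (IH (iota z) (vartheta s)); auto. lia.
  - destruct (lt_total r t) as [e|[e|e]].
    + rewrite (unfold_lt HBH). left. split; [exact e|].
      intros z hz. pose proof (L_lt_supp _ _ L r z hz). pose proof (HBH z).
      apply (IH (iota z) (vartheta s)); auto. lia.
    + subst t. exfalso. apply (th_asym HBH _ _ _ (le_n _) h1' h2').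
    + rewrite (unfold_lt HBH). right. split; [exact e|].
      exists y. split; [exact hy|]. left.
      destruct k2 as [k2|k2].
      * pose proof (L_lt_supp _ _ L t y hy). pose proof (HBH y).
        apply (IH (vartheta r) (vartheta s) (iota y)); auto. lia.
      * rewrite <- k2. exact h1'.
  - destruct k1 as [k1|k1].
    + pose proof (L_lt_supp _ _ L s x hx). pose proof (HBH x).
      apply (IH (vartheta r) (iota x) (vartheta t)); auto. lia.
    + rewrite k1. auto.
  - rewrite (unfold_lt HBH). right. split; [exact (lt_trans _ _ _ h2 h1)|].
    exists y. split; [exact hy|]. left.
    destruct k2 as [k2|k2].
    * pose proof (L_lt_supp _ _ L t y hy). pose proof (HBH y).
      apply (IH (vartheta r) (vartheta s) (iota y)); auto. lia.
    * rewrite <- k2. exact h1'.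
Qed.
Arguments th_trans {T X iota L} HBH : rename.


Lemma th_total (T : praedilator) (X : LO) (iota : X -> theta T X)
  (L : X -> nat) (HBH : BH_system iota L) :
  forall n a b, Ltheta L a + Ltheta L b <= n ->
    theta_lt iota L a b \/ a = b \/ theta_lt iota L b a.
Proof.
  induction n as [|n IH]; intros a b hn.
  { pose proof (Ltheta_pos _ _ L a). lia. }
  destruct a as [s], b as [t].
  destruct (lt_total s t) as [e|[e|e]].
  - destruct (classic (forall x, In x (supp T s) -> theta_lt iota L (iota x) (vartheta t))) as [H|H].
    + left. rewrite (unfold_lt HBH). left. auto.
    + apply not_all_ex_not in H. destruct H as [x H].
      apply imply_to_and in H. destruct H as [hx H].
      right; right. rewrite (unfold_lt HBH). right. split; [exact e|].
      exists x. split; [exact hx|].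
      pose proof (L_lt_supp _ _ L s x hx). pose proof (HBH x).
      destruct (IH (iota x) (vartheta t) ltac:(lia)) as [k|[k|k]].
      * contradiction.
      * right. symmetry. exact k.
      * left. exact k.
  - subst. right; left. reflexivity.
  - destruct (classic (forall y, In y (supp T t) -> theta_lt iota L (iota y) (vartheta s))) as [H|H].
    + right; right. rewrite (unfold_lt HBH). left. auto.
    + apply not_all_ex_not in H. destruct H as [y H].
      apply imply_to_and in H. destruct H as [hy H].
      left. rewrite (unfold_lt HBH). right. split; [exact e|].
      exists y. split; [exact hy|].
      pose proof (L_lt_supp _ _ L t y hy). pose proof (HBH y).
      destruct (IH (iota y) (vartheta s) ltac:(lia)) as [k|[k|k]].
      * contradiction.
      * right. symmetry. exact k.
      * left. exact k.
Qed.
Arguments th_total {T X iota L} HBH : rename.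


Lemma th_linear (T : praedilator) (X : LO) (iota : X -> theta T X)
  (L : X -> nat) (HBH : BH_system iota L) : is_linear_order (theta_lt iota L).
Proof.
  split; [|split].
  - exact (th_irrefl HBH).
  - intros a b c. exact (th_trans HBH _ a b c (le_n _)).
  - intros a b. exact (th_total HBH _ a b (le_n _)).
Qed.
Arguments th_linear {T X iota L} HBH .


Theorem theorem3p9 (T : praedilator) (X : LO) (iota : X -> theta T X)
  (L : X -> nat) (HBH : BH_system iota L)
  (Hlin : is_linear_order (theta_lt iota L)) (Hm : iota_mono iota L) :
  BH_system (iota_next Hlin Hm) (Ltheta L) /\
  good (iota_next Hlin Hm) (Ltheta L).
Proof.
  set (e := @MkEmb X (ThetaLO Hlin) iota Hm).
  assert (HBH1 : BH_system (iota_next Hlin Hm) (Ltheta L)).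
  { intros [s]. simpl. f_equal.
    transitivity (maxlist (map (Ltheta L) (map e (supp T s)))).
    { apply maxlist_eq. exact (supp_nat T e s). }
    rewrite map_map. apply f_equal. apply map_ext_in. intros x _. apply HBH. }
  split; [exact HBH1|]. split; [exact (th_linear HBH1)|].
  assert (M : forall n a b, Ltheta L a + Ltheta L b <= n ->
            theta_lt iota L a b ->
            theta_lt (iota_next Hlin Hm) (Ltheta L) (iota_next Hlin Hm a)
                     (iota_next Hlin Hm b)).
  { induction n as [|n IH]; intros a b hn h.
    { pose proof (Ltheta_pos _ _ L a). lia. }
    destruct a as [s], b as [t]. simpl iota_next.
    rewrite (unfold_lt HBH) in h. rewrite (unfold_lt HBH1).
    destruct h as [[h k]|[h [y [hy k]]]].
    - left. split; [exact (emb_mono (Tmap T e) h)|].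
      intros z hz. apply (supp_nat T e s z) in hz.
      apply in_map_iff in hz. destruct hz as [x [<- hx]].
      pose proof (L_lt_supp _ _ L s x hx). pose proof (HBH x).
      exact (IH (iota x) (vartheta t) ltac:(lia) (k x hx)).
    - right. split; [exact (emb_mono (Tmap T e) h)|].
      exists (e y). split.
      + apply (supp_nat T e t). apply in_map. exact hy.
      + destruct k as [k|k].
        * left. pose proof (L_lt_supp _ _ L t y hy). pose proof (HBH y).
          exact (IH (vartheta s) (iota y) ltac:(lia) k).
        * right. simpl. rewrite <- k. reflexivity. }
  intros a b h. exact (M _ a b (le_n _) h).
Qed.
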